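(* Let $r$ be a positive integer with $r\le n_i$ for all $i$, and let $T=\sum_{j=1}^r e_1^j\otimes\cdots\otimes e_d^j$. The stabilizer $H=\{g\in G: g\cdot T=T\}$ consists exactly of the elements $$h = \begin{bmatrix} D_1Q & M_1\\ 0 & A_1\end{bmatrix}\times\cdots\times\begin{bmatrix} D_dQ & M_d\\ 0 & A_d\end{bmatrix}$$ (block sizes $r$ and $n_i-r$), where $D_1,\dots,D_d$ are invertible diagonal $r\times r$ matrices with $D_1D_2\cdots D_d=I$, $Q$ is an $r\times r$ permutation matrix (the same in every factor), the $A_i$ are invertible $(n_i-r)\times(n_i-r)$ matrices, and the $M_i$ are arbitrary $r\times(n_i-r)$ matrices.
   Context: Fix integers $d\ge 3$ and $n_1,\dots,n_d\ge 2$. $V=\mathbb{R}^{n_1}\otimes\cdots\otimes\mathbb{R}^{n_d}$, and $G=\mathrm{GL}(n_1)\times\cdots\times\mathrm{GL}(n_d)$ (real invertible matrices) acts on $V$ by $(g_1,\dots,g_d)\cdot(v_1\otimes\cdots\otimes v_d)=(g_1v_1)\otimes\cdots\otimes(g_dv_d)$, extended linearly. $e_i^1,\dots,e_i^{n_i}$ is the standard basis of $\mathbb{R}^{n_i}$. *)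

(* Defs.v *)
From HB Require Import structures.
From mathcomp Require Import all_boot all_order all_algebra.
From mathcomp Require Import perm.
From mathcomp Require Import reals.
Set Implicit Arguments. Unset Strict Implicit. Unset Printing Implicit Defensive.
Import GRing.Theory.
Local Open Scope ring_scope.

Definition midx (d : nat) (n : 'I_d -> nat) := {dffun forall i : 'I_d, 'I_(n i)}.

(* V = R^{n_1} (x) ... (x) R^{n_d}, identified with coordinate arrays in the
   basis e_1^{k_1} (x) ... (x) e_d^{k_d}. *)
Definition tensor (R : realType) (d : nat) (n : 'I_d -> nat) := {ffun midx n -> R}.

(* Action of (g_1,...,g_d): linear extension of
   v_1 (x) ... (x) v_d |-> (g_1 v_1) (x) ... (x) (g_d v_d). *)
Definition tact (R : realType) (d : nat) (n : 'I_d -> nat)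
  (g : forall i : 'I_d, 'M[R]_(n i)) (T : tensor R n) : tensor R n :=
  [ffun k : midx n => \sum_(l : midx n) (\prod_(i < d) g i (k i) (l i)) * T l].

(* T = sum_{j=1}^r e_1^j (x) ... (x) e_d^j  (basis vectors indexed from 0). *)
Definition diag_tensor (R : realType) (d : nat) (n : 'I_d -> nat) (r : nat)
  : tensor R n :=
  [ffun k : midx n => \sum_(j < r) \prod_(i < d) ((nat_of_ord (k i) == j)%:R : R)].

(* Main.v *)
Require Import Defs.
From HB Require Import structures.
From mathcomp Require Import all_boot all_order all_algebra.
From mathcomp Require Import perm.
From mathcomp Require Import reals.
From mathcomp Require Import zify.
Import GRing.Theory.
Local Open Scope ring_scope.

Lemma dep_distr (R : comNzRingType) (I : finType) (T_ : I -> finType)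
  (F : forall i, T_ i -> R) :
  \sum_(t : {dffun forall i, T_ i}) \prod_i F i (t i) = \prod_i \sum_(x : T_ i) F i x.
Proof.
rewrite (reindex (@dffun_of_fprod I T_)); last exact/onW_bij/dffun_of_fprod_bij.
have := @big_fprod R 0 1 *%R +%R I T_ (fun i => [ffun x => F i x]).
move=> E.
transitivity (\sum_t \prod_(i in I) [ffun x => F i x] (fun_of_fprod t i)).
  apply: eq_bigr => t _; apply: eq_bigr => i _.
  by rewrite /dffun_of_fprod !ffunE.
rewrite E; symmetry.
transitivity (\prod_i \sum_(x in tagged_with T_ i) untag 0 [ffun y => F i y] x).
  apply: eq_bigr => i _.
  have := (@big_tag R 0 +%R I T_ (fun i x => [ffun x => F i x] x) i).
  move=> <-. by apply: eq_bigr => x _; rewrite ffunE.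
by rewrite bigA_distr_big_dep.
Qed.

Section Main.
Variables (R : realType) (d : nat) (n : 'I_d -> nat) (r : nat).
Hypothesis hr : forall i, (r <= n i)%N.

Definition w i (j : 'I_r) : 'I_(n i) := widen_ord (hr i) j.

Lemma sum_delta i (F : 'I_(n i) -> R) (j : 'I_r) :
  \sum_x F x * ((nat_of_ord x == j)%:R) = F (w i j).
Proof.
rewrite (bigD1 (w i j)) //= eqxx mulr1 big1 ?addr0 // => x hx.
suff -> : (nat_of_ord x == j) = false by rewrite mulr0.
by apply/negbTE; apply: contra hx => /eqP e; apply/eqP/val_inj.
Qed.

Lemma contr (F : forall i, 'I_(n i) -> R) :
  \sum_(k : midx n) (\prod_i F i (k i)) * diag_tensor R n r k
  = \sum_(j < r) \prod_i F i (w i j).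
Proof.
under eq_bigr do rewrite ffunE big_distrr.
rewrite exchange_big; apply: eq_bigr => j _ /=.
under eq_bigr do rewrite -big_split /=.
rewrite (@dep_distr _ _ _ (fun i x => F i x * ((nat_of_ord x == j)%:R))).
by apply: eq_bigr => i _; rewrite sum_delta.
Qed.

Lemma tactE (g : forall i : 'I_d, 'M[R]_(n i)) k :
  tact g (diag_tensor R n r) k = \sum_(j < r) \prod_i g i (k i) (w i j).
Proof. by rewrite ffunE (contr (fun i x => g i (k i) x)). Qed.

Lemma contr2 (F : forall i, 'I_(n i) -> R) (G : forall i, 'I_(n i) -> 'I_r -> R) :
  \sum_(k : midx n) (\prod_i F i (k i)) * \sum_(j < r) \prod_i G i (k i) j
  = \sum_(j < r) \prod_i \sum_x F i x * G i x j.
Proof.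
under eq_bigr do rewrite big_distrr.
rewrite exchange_big; apply: eq_bigr => j _ /=.
under eq_bigr do rewrite -big_split /=.
by rewrite (@dep_distr _ _ _ (fun i x => F i x * G i x j)).
Qed.


Variable g : forall i : 'I_d, 'M[R]_(n i).
Hypothesis Hu : forall i, g i \in unitmx.
Hypothesis HT : tact g (diag_tensor R n r) = diag_tensor R n r.

Lemma ident c (p : 'I_d -> 'I_r) (m : 'I_(n c)) :
  \sum_(j < r) g c m (w c j) * \prod_(i | i != c) ((p i == j)%:R : R)
  = \sum_(j < r) ((nat_of_ord m == j)%:R) *
      \prod_(i | i != c) invmx (g i) (w i (p i)) (w i j).
Proof.
pose F i (x : 'I_(n i)) : R :=
  if i == c then ((nat_of_ord x == m)%:R) else invmx (g i) (w i (p i)) x.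
have E : \sum_(j < r) \prod_i \sum_x F i x * g i x (w i j)
   = \sum_(j < r) \prod_i F i (w i j).
  rewrite -contr2 -contr; apply: eq_bigr => k _.
  by rewrite -HT tactE.
transitivity (\sum_(j < r) \prod_i \sum_x F i x * g i x (w i j)).
  apply: eq_bigr => j _; rewrite [RHS](bigD1 c) //=; congr (_ * _).
    rewrite /F eqxx (bigD1 m) //= eqxx mul1r big1 ?addr0 // => x hx.
    suff -> : (nat_of_ord x == m) = false by rewrite mul0r.
    by apply/negbTE; apply: contra hx => /eqP e; apply/eqP/val_inj.
  apply: eq_bigr => i hi; rewrite /F (negbTE hi).
  have := mulVmx (Hu i); move/matrixP => /(_ (w i (p i)) (w i j)).
  rewrite !mxE => <-; apply: eq_bigr => x _; done.
rewrite E; apply: eq_bigr => j _; rewrite (bigD1 c) //= /F eqxx eq_sym; congr (_ * _).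
by apply: eq_bigr => i hi; rewrite (negbTE hi).
Qed.

Hypothesis hd : (3 <= d)%N.

Lemma other3 (b c : 'I_d) : exists e : 'I_d, (e != b) && (e != c).
Proof.
case: b c => [b hb] [c hc].
have h0 : (0 < d)%N by apply: leq_trans hd.
have h1 : (1 < d)%N by apply: leq_trans hd.
have h2 : (2 < d)%N by [].
case: (boolP ((b != 0) && (c != 0))%N) => [/andP[B C]|H0].
  exists (Ordinal h0); apply/andP; split; apply/eqP; case=> e; subst; lia.
case: (boolP ((b != 1) && (c != 1))%N) => [/andP[B C]|H1].
  exists (Ordinal h1); apply/andP; split; apply/eqP; case=> e; subst; lia.
exists (Ordinal h2); apply/andP; split; apply/eqP; case=> e; subst; lia.
Qed.

Lemma prod_ind0 (c : 'I_d) (q j : 'I_r) : q != j ->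
  \prod_(i | i != c) (((q == j)%:R) : R) = 0.
Proof.
move=> hqj; have [e /andP [_ he]] := other3 c c.
by rewrite (bigD1 e) //= (negbTE hqj) mul0r.
Qed.

Lemma colA c q (m : 'I_(n c)) : (r <= m)%N -> g c m (w c q) = 0.
Proof.
move=> hm; have := ident c (fun _ => q) m.
have Hp : \prod_(i | i != c) ((q == q)%:R : R) = 1.
  by rewrite big1 // => i _; rewrite eqxx.
rewrite (bigD1 q) //= Hp mulr1 big1 ?addr0; last first.
  by move=> j hj; rewrite prod_ind0 ?mulr0 // eq_sym.
move=> ->; rewrite big1 // => j _.
suff -> : (nat_of_ord m == j) = false by rewrite mul0r.
apply/negbTE; apply/eqP => e; move: (ltn_ord j); rewrite -e; lia.
Qed.

Lemma colB c q (m : 'I_r) :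
  g c (w c m) (w c q) = \prod_(i | i != c) invmx (g i) (w i q) (w i m).
Proof.
have := ident c (fun _ => q) (w c m).
have Hp : \prod_(i | i != c) ((q == q)%:R : R) = 1.
  by rewrite big1 // => i _; rewrite eqxx.
rewrite (bigD1 q) //= Hp mulr1 big1 ?addr0; last first.
  by move=> j hj; rewrite prod_ind0 ?mulr0 // eq_sym.
move=> ->; rewrite (bigD1 m) //= eqxx mul1r [X in _ + X]big1 ?addr0 // => j hj.
suff -> : (nat_of_ord (w c m) == j) = false by rewrite mul0r.
by apply/negbTE; apply: contra hj => /eqP e; apply/eqP/val_inj.
Qed.

Lemma colC c b q q' (m : 'I_r) : b != c -> q != q' ->
  \prod_(i | i != c) invmx (g i) (w i (if i == b then q' else q)) (w i m) = 0.
Proof.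
move=> hbc hq.
have := ident c (fun i => if i == b then q' else q) (w c m).
rewrite big1; last first.
  move=> j _.
  case: (eqVneq q' j) => [<-|hj].
    have [e /andP [heb hec]] := other3 b c.
    by rewrite (bigD1 e) //= (negbTE heb) (negbTE hq) mul0r mulr0.
  by rewrite (bigD1 b) //= eqxx (negbTE hj) mul0r mulr0.
rewrite (bigD1 m) //= eqxx mul1r [X in _ + X]big1 ?addr0 //.
move=> j hj.
suff -> : (nat_of_ord (w c m) == j) = false by rewrite mul0r.
by apply/negbTE; apply: contra hj => /eqP e; apply/eqP/val_inj.
Qed.

Lemma rowuniq c (m q q' : 'I_r) : q != q' ->
  g c (w c m) (w c q) * g c (w c m) (w c q') = 0.
Proof.
move=> hq; have [b /andP [hbc _]] := other3 c c.
rewrite !colB -big_split /=.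
rewrite (eq_bigr (fun i => invmx (g i) (w i (if i == b then q' else q)) (w i m)
           * invmx (g i) (w i (if i == b then q else q')) (w i m))); last first.
  by move=> i _; case: (i == b) => //; rewrite mulrC.
by rewrite big_split /= colC // mul0r.
Qed.


Lemma colnz c q : exists m : 'I_r, g c (w c m) (w c q) != 0.
Proof.
case: (boolP [exists m : 'I_r, g c (w c m) (w c q) != 0]) => [/existsP //|/existsPn H].
have := mulVmx (Hu c); move/matrixP => /(_ (w c q) (w c q)).
rewrite !mxE eqxx /= big1 ?(@oner_eq0 R) //; last first.
  move=> a _.
  case: (ltnP a r) => ha.
    have -> : a = w c (Ordinal ha) by apply: val_inj.
    by move: (H (Ordinal ha)); rewrite negbK => /eqP ->; rewrite mulr0.
  by rewrite colA // mulr0.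
by move=> /esym/eqP; rewrite oner_eq0.
Qed.

Definition s c q := xchoose (colnz c q).

Lemma s_nz c q : g c (w c (s c q)) (w c q) != 0.
Proof. exact: (xchooseP (colnz c q)). Qed.

Lemma s_inj c : injective (s c).
Proof.
move=> q q' e; apply/eqP; apply/negPn/negP => hq.
have := rowuniq c (s c q) q q' hq; apply/eqP.
by rewrite mulf_neq0 ?s_nz // e s_nz.
Qed.

Lemma supp c q (a : 'I_(n c)) : (nat_of_ord a != s c q) -> g c a (w c q) = 0.
Proof.
move=> ha.
case: (ltnP a r) => har; last by rewrite colA.
have -> : a = w c (Ordinal har) by apply: val_inj.
set a' := Ordinal har.
pose sg := perm (s_inj c).
have ea : a' = s c (sg^-1 a')%g by have := permKV sg a'; rewrite permE => ->.
set q'' := (sg^-1 a')%g in ea.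
have hq : q != q''.
  apply: contra ha => /eqP e; apply/eqP; transitivity (nat_of_ord a'); first by [].
  by rewrite {1}ea -e.
have := rowuniq c a' q q'' hq => /eqP; rewrite mulf_eq0 => /orP [/eqP //|].
by rewrite {1}ea (negbTE (s_nz c q'')).
Qed.

Lemma evalpt j :
  \prod_i g i (w i (s i j)) (w i j) =
  \sum_(j'' < r) \prod_i (((s i j == j'')%:R) : R).
Proof.
have := congr1 (fun X : tensor R n => X ([ffun i => w i (s i j)] : midx n)) HT.
rewrite tactE ffunE => E.
transitivity (\sum_(j'' < r) \prod_i ((nat_of_ord ((([ffun i => w i (s i j)] : midx n)) i) == j'')%:R : R)); last first.
  by apply: eq_bigr => j'' _; apply: eq_bigr => i _; rewrite ffunE.
rewrite -E.
have [i0 _] := other3 (Ordinal (leq_trans (isT : (0 < 3)%N) hd)) (Ordinal (leq_trans (isT : (0 < 3)%N) hd)).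
rewrite (bigD1 j) //= [X in _ + X]big1 ?addr0.
  by apply: eq_bigr => i _; rewrite ffunE.
move=> j' hj; rewrite (bigD1 i0) //= ffunE supp ?mul0r //=.
by apply: contra hj => /eqP /val_inj /s_inj ->.
Qed.


Lemma prod_nz j : \prod_i g i (w i (s i j)) (w i j) != 0.
Proof. by apply/prodf_neq0 => i _; exact: s_nz. Qed.

Lemma s_const c c' j : s c j = s c' j.
Proof.
apply/eqP; apply/negPn/negP => hne.
have := prod_nz j; rewrite evalpt big1 ?eqxx // => j'' _.
case: (eqVneq (s c j) j'') => [e|hj].
  by rewrite (bigD1 c') //= -e eq_sym (negbTE hne) mul0r.
by rewrite (bigD1 c) //= (negbTE hj) mul0r.
Qed.

Lemma lam_prod (c0 : 'I_d) j : \prod_i g i (w i (s i j)) (w i j) = 1.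
Proof.
rewrite evalpt (bigD1 (s c0 j)) //= big1 ?mul1r.
  rewrite [X in _ + X]big1 ?addr0 // => j'' hj.
  by rewrite (bigD1 c0) //= eq_sym (negbTE hj) mul0r.
by move=> i _; rewrite (s_const i c0) eqxx.
Qed.

End Main.

Arguments w {d n r} hr i j.
Arguments s_const {R d n r hr g Hu HT hd}.
Arguments supp {R d n r hr g Hu HT hd}.
Arguments lam_prod {R d n r hr g Hu HT hd}.
Arguments colA {R d n r hr g Hu HT hd}.
Arguments s_nz {R d n r hr g Hu HT hd}.
Arguments s_inj {R d n r hr g Hu HT hd}.

Lemma big_diag (R : comNzRingType) m k (F : 'I_m -> 'rV[R]_k) :
  \big[mulmx/1%:M]_(i < m) diag_mx (F i) = diag_mx (\row_j \prod_(i < m) F i 0 j).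
Proof.
elim: m F => [|m IH] F.
  rewrite big_ord0; apply/matrixP => a b; rewrite !mxE big_ord0.
  by case: (a == b).
rewrite big_ord_recl /= IH mulmx_diag; congr diag_mx.
by apply/matrixP => a b; rewrite !mxE big_ord_recl.
Qed.

Lemma unit_cast (R : comUnitRingType) m1 m2 (e : m1 = m2) (A : 'M[R]_m1) :
  (castmx (e, e) A \in unitmx) = (A \in unitmx).
Proof. by case: m2 / e. Qed.

Lemma entry_back (R : realType) (m r : nat) (hr : (r <= m)%N) (Dv : 'rV[R]_r)
  (Q : 'S_r) (Mm : 'M[R]_(r, m - r)) (Am : 'M[R]_(m - r)) (a : 'I_m) (j : 'I_r) :
  castmx (subnKC hr, subnKC hr) (block_mx (diag_mx Dv *m perm_mx Q) Mm 0 Am)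
     a (widen_ord hr j)
  = Dv 0 ((Q^-1)%g j) * ((nat_of_ord a == (Q^-1)%g j)%:R).
Proof.
rewrite castmxE /=.
have -> : cast_ord (esym (subnKC hr)) (widen_ord hr j) = lshift (m - r) j
  by apply: val_inj.
set a' := cast_ord _ a.
have ea : nat_of_ord a' = a by [].
case: (splitP a') => [a1 e1|a2 e2].
  have -> : a' = lshift (m - r) a1 by apply: val_inj.
  rewrite block_mxEul mul_diag_mx !mxE.
  case: (eqVneq (Q a1) j) => [<-|hne].
    by rewrite permK -ea e1 !eqxx.
  have hn : (nat_of_ord a == (Q^-1)%g j) = false.
    apply/negbTE; apply: contra hne; rewrite -ea e1 => /eqP /val_inj ->.
    by rewrite permKV.
  by rewrite hn !mulr0.
have -> : a' = rshift r a2 by apply: val_inj.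
rewrite block_mxEdl mxE.
have hn : (nat_of_ord a == (Q^-1)%g j) = false.
  apply/negbTE/eqP => e; move: (ltn_ord ((Q^-1)%g j)); rewrite -e -ea e2; lia.
by rewrite hn mulr0.
Qed.

Theorem mainTheorem3 (R : realType) (d : nat) (n : 'I_d -> nat) (r : nat)
  (hd : (3 <= d)%N) (hn : forall i, (2 <= n i)%N)
  (hr0 : (0 < r)%N) (hr : forall i, (r <= n i)%N)
  (g : forall i : 'I_d, 'M[R]_(n i)) :
  ((forall i, g i \in unitmx) /\ tact g (diag_tensor R n r) = diag_tensor R n r)
  <->
  (exists (D : 'I_d -> 'rV[R]_r) (Q : 'S_r)
          (A : forall i : 'I_d, 'M[R]_(n i - r))
          (M : forall i : 'I_d, 'M[R]_(r, n i - r)),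
     [/\ forall i, diag_mx (D i) \in unitmx,
         \big[mulmx/1%:M]_(i < d) diag_mx (D i) = 1%:M,
         forall i, A i \in unitmx
       & forall i, g i = castmx (subnKC (hr i), subnKC (hr i))
                       (block_mx (diag_mx (D i) *m perm_mx Q) (M i) 0 (A i))]).
Proof.
split.
- case=> Hu HT.
  have h0 : (0 < d)%N by apply: leq_trans hd.
  pose c0 := Ordinal h0.
  pose S := @s R d n r hr g Hu HT hd.
  pose sg := perm (@s_inj _ _ _ _ hr _ Hu HT hd c0).
  have sgE : forall i q, S i q = sg q.
    by move=> i q; rewrite permE /S (s_const i c0).
  have supp' : forall i q (a : 'I_(n i)), nat_of_ord a != sg q -> g i a (w hr i q) = 0.
    by move=> i q a; rewrite -(sgE i); exact: supp.
  pose Q := (sg^-1)%g.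
  pose D i := \row_m g i (w hr i m) (w hr i (Q m)).
  pose G' i := castmx (esym (subnKC (hr i)), esym (subnKC (hr i))) (g i).
  exists D, Q, (fun i => drsubmx (G' i)), (fun i => ursubmx (G' i)).
  have Dnz : forall i m, D i 0 m != 0.
    move=> i m; rewrite mxE.
    have e : w hr i m = w hr i (S i (Q m)) by rewrite sgE /Q permKV.
    rewrite e; exact: s_nz.
  have UL : forall i, ulsubmx (G' i) = diag_mx (D i) *m perm_mx Q.
    move=> i; apply/matrixP => a b; rewrite mul_diag_mx !mxE castmxE /=.
    have -> : cast_ord (esym (esym (subnKC (hr i)))) (lshift (n i - r) a) = w hr i a
      by apply: val_inj.
    have -> : cast_ord (esym (esym (subnKC (hr i)))) (lshift (n i - r) b) = w hr i b
      by apply: val_inj.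
    case: (eqVneq (Q a) b) => [<-|hne]; first by rewrite mulr1.
    rewrite mulr0 supp' //; apply: contra hne => /eqP e.
    have -> : a = sg b by apply: val_inj.
    by rewrite /Q permK.
  have DL : forall i, dlsubmx (G' i) = 0.
    move=> i; apply/matrixP => a b; rewrite !mxE castmxE /=.
    have -> : cast_ord (esym (esym (subnKC (hr i)))) (lshift (n i - r) b) = w hr i b
      by apply: val_inj.
    by rewrite (@colA R d n r hr g Hu HT hd) //= leq_addr.
  have GE : forall i, G' i = block_mx (diag_mx (D i) *m perm_mx Q)
                                  (ursubmx (G' i)) 0 (drsubmx (G' i)).
    by move=> i; rewrite -UL -DL submxK.
  split.
  + move=> i; rewrite unitmxE det_diag unitfE; apply/prodf_neq0 => m _; exact: Dnz.
  + rewrite big_diag; apply/matrixP => a b; rewrite !mxE.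
    have P1 : \prod_i D i 0 a = 1.
      rewrite -[RHS](@lam_prod R d n r hr g Hu HT hd c0 (Q a)); apply: eq_bigr => i _.
      by rewrite mxE -/S sgE /Q permKV.
    by rewrite P1; case: (a == b).
  + move=> i; have := Hu i.
    rewrite -(@unit_cast _ _ _ (esym (subnKC (hr i))) (g i)) -/(G' i) GE unitmxE det_ublock unitrM.
    by case/andP => _; rewrite block_mxKdr unitmxE.
  + by move=> i; rewrite -GE /G' castmxKV.
- case=> D [Q [A [M [hD hprod hA hg]]]].
  split.
  + move=> i; rewrite hg unit_cast unitmxE det_ublock unitrM -!unitmxE unitmx_mul.
    by rewrite hD unitmx_perm hA.
  + apply/ffunP => k; rewrite tactE /w.
    have P1 : forall x, \prod_i D i 0 x = 1.
      move=> x; move: hprod; rewrite big_diag => /matrixP/(_ x x).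
      by rewrite !mxE eqxx /= mulr1n.
    under eq_bigr do under eq_bigr do rewrite hg entry_back.
    under eq_bigr do rewrite big_split /= P1 mul1r.
    rewrite ffunE [RHS](reindex_inj (h := (Q^-1)%g) (@perm_inj _ _)).
    done.
Qed.
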